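(* Let $\mathbb F$ be a field, fix a partition of $\{1,\dots,m\}$ into consecutive (possibly empty) intervals $I_1,\dots,I_k$ (in increasing order), and let $D$ be an $m\times m$ differential matrix over $\mathbb F$ that is block-superdiagonal with respect to this partition. Then there exist an $m\times m$ almost-Jordan differential matrix $\underline D$ that is block-superdiagonal with respect to the same partition, and an $m\times m$ triangular matrix $B$ that is block-diagonal with respect to the same partition, such that $D=B\,\underline D\,B^{-1}$.
   Context: A differential matrix is a square matrix $D$ with $D^2=0$. A differential matrix is Jordan if it is block-diagonal with every diagonal block equal to either the $1\times 1$ zero matrix $[0]$ or the $2\times 2$ matrix $\begin{bmatrix}0&1\\0&0\end{bmatrix}$. A differential matrix $\underline D$ is almost-Jordan if there is a permutation matrix $P$ such that $P^{-1}\underline D P$ is Jordan. A square matrix is triangular if it is upper-triangular and invertible. Given a partition of the index set $\{1,\dots,m\}$ into consecutive intervals $I_1,\dots,I_k$, an $m\times m$ matrix $M$ is block-diagonal if $M_{ab}=0$ whenever $a\in I_i$, $b\in I_j$ with $i\ne j$, and block-superdiagonal if $M_{ab}=0$ whenever $a\in I_i$, $b\in I_j$ with $j\neq i+1$. *)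

(* Defs.v *)
From HB Require Import structures.
From mathcomp Require Import all_boot all_order all_algebra all_fingroup.
Set Implicit Arguments. Unset Strict Implicit. Unset Printing Implicit Defensive.
Import Order.TTheory GRing.Theory Num.Theory.
Local Open Scope ring_scope.

Section Defs.
Variable F : fieldType.

Definition differential (m : nat) (D : 'M[F]_m) : Prop := D *m D = 0.

(* Jordan matrix with diagonal block sizes s (each 1 or 2): the 1x1 block is [0],
   the 2x2 block is [[0,1],[0,0]]; block t starts at index sumn (take t s). *)
Definition jordan_mx (m : nat) (s : seq nat) : 'M[F]_m :=
  \matrix_(i < m, j < m)
    (if [exists t : 'I_(size s),
          [&& nth 0%N s t == 2%N, (i : nat) == sumn (take t s) & (j : nat) == i.+1]]
     then 1 else 0).

Definition is_jordan (m : nat) (J : 'M[F]_m) : Prop :=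
  exists s : seq nat,
    [/\ all (fun x => (x == 1%N) || (x == 2%N)) s, sumn s = m & J = jordan_mx m s].

Definition almost_jordan (m : nat) (D : 'M[F]_m) : Prop :=
  differential D /\
  exists p : 'S_m, is_jordan (invmx (perm_mx p) *m D *m perm_mx p).

Definition triangular (m : nat) (B : 'M[F]_m) : Prop :=
  (forall i j : 'I_m, (j < i)%N -> B i j = 0) /\ B \in unitmx.

(* A partition of {0..m-1} into consecutive (possibly empty) intervals I_0..I_{k-1}
   in increasing order is encoded by a nondecreasing block-index map blk. *)
Definition consec_partition (m k : nat) (blk : 'I_m -> 'I_k) : Prop :=
  forall a b : 'I_m, (a <= b)%N -> (blk a <= blk b)%N.

Definition block_diag (m k : nat) (blk : 'I_m -> 'I_k) (M : 'M[F]_m) : Prop :=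
  forall a b : 'I_m, (blk a : nat) != blk b -> M a b = 0.

Definition block_superdiag (m k : nat) (blk : 'I_m -> 'I_k) (M : 'M[F]_m) : Prop :=
  forall a b : 'I_m, (blk b : nat) != (blk a).+1 -> M a b = 0.
End Defs.

(* Main.v *)
Require Import Defs.
From HB Require Import structures.
From mathcomp Require Import all_boot all_order all_algebra all_fingroup.
From mathcomp Require Import ring zify.
Set Implicit Arguments. Unset Strict Implicit. Unset Printing Implicit Defensive.
Import Order.TTheory GRing.Theory Num.Theory.
Local Open Scope ring_scope.

Section Main.
Variables (F : fieldType) (m k : nat) (blk : 'I_m -> 'I_k).
Hypothesis Hc : consec_partition blk.

Definition upper (A : 'M[F]_m) := forall i j : 'I_m, (j < i)%N -> A i j = 0.

Lemma upper_mul A B : upper A -> upper B -> upper (A *m B).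
Proof.
move=> hA hB i j ji; rewrite mxE big1 // => l _.
case: (ltnP l i) => li; first by rewrite hA ?mul0r.
by rewrite hB ?mulr0 //; apply: leq_trans ji li.
Qed.

Lemma upper1 : upper 1%:M.
Proof. by move=> i j ji; rewrite mxE; case: eqP => // e; rewrite e ltnn in ji. Qed.

Lemma bdiag_mul (A B : 'M[F]_m) : block_diag blk A -> block_diag blk B ->
  block_diag blk (A *m B).
Proof.
move=> hA hB a b ab; rewrite mxE big1 // => l _.
case: (eqVneq (blk a : nat) (blk l)) => al.
  by rewrite hB ?mulr0 // -al.
by rewrite hA ?mul0r.
Qed.

Lemma bdiag1 : block_diag blk (1%:M : 'M[F]_m).
Proof.
move=> a b ab; rewrite mxE; case: eqP => // e; by rewrite e eqxx in ab.
Qed.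

Lemma bsup_mull (A B : 'M[F]_m) : block_diag blk A -> block_superdiag blk B ->
  block_superdiag blk (A *m B).
Proof.
move=> hA hB a b ab; rewrite mxE big1 // => l _.
case: (eqVneq (blk a : nat) (blk l)) => al.
  by rewrite hB ?mulr0 // -al.
by rewrite hA ?mul0r.
Qed.

Lemma bsup_mulr (A B : 'M[F]_m) : block_superdiag blk A -> block_diag blk B ->
  block_superdiag blk (A *m B).
Proof.
move=> hA hB a b ab; rewrite mxE big1 // => l _.
case: (eqVneq (blk l : nat) (blk a).+1) => al.
  by rewrite hB ?mulr0 // al eq_sym.
by rewrite hA ?mul0r.
Qed.

Lemma bsup_blk (A : 'M[F]_m) i j : block_superdiag blk A -> A i j != 0 ->
  (blk j : nat) = (blk i).+1.
Proof. by move=> hA; apply: contraNeq => /hA ->. Qed.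

Lemma bsup_lt (A : 'M[F]_m) i j : block_superdiag blk A -> A i j != 0 ->
  (i < j)%N.
Proof.
move=> hA /(bsup_blk hA) e; rewrite ltnNge; apply/negP => /Hc.
by rewrite e ltnn.
Qed.


Definition R1 (y : 'cV[F]_m) (p : 'I_m) : 'M[F]_m := 1%:M + y *m delta_mx (0:'I_1) p.

Lemma rk1l (u : 'cV[F]_m) (p i j : 'I_m) (W : 'M[F]_m) :
  (u *m delta_mx (0:'I_1) p *m W) i j = u i 0 * W p j.
Proof. by rewrite -mulmxA -rowE mxE big_ord1 mxE. Qed.

Lemma rk1r (W : 'M[F]_m) (u : 'cV[F]_m) (p i j : 'I_m) :
  (W *m (u *m delta_mx (0:'I_1) p)) i j = (W *m u) i 0 * (j == p)%:R.
Proof. by rewrite mulmxA mxE big_ord1 [delta_mx _ _ _ _]mxE. Qed.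

Lemma R1E y (p i j : 'I_m) : R1 y p i j = (i == j)%:R + y i 0 * (j == p)%:R.
Proof. by rewrite !mxE big_ord1 mxE eqxx. Qed.

Lemma conjR1E y' y (p i j : 'I_m) (X : 'M[F]_m) :
  (R1 y' p *m X *m R1 y p) i j =
  X i j + (X *m y) i 0 * (j == p)%:R +
  y' i 0 * (X p j + (X *m y) p 0 * (j == p)%:R).
Proof.
have e1 : forall a b, (X *m (1%:M + y *m delta_mx (0:'I_1) p)) a b =
    X a b + (X *m y) a 0 * (b == p)%:R.
  by move=> a b; rewrite mulmxDr mulmx1 mxE rk1r.
rewrite /R1 mulmxDl mul1mx mulmxDl mxE e1 -[_ *m X *m _]mulmxA rk1l e1.
by [].
Qed.

Lemma R1_mul (y : 'cV[F]_m) (p : 'I_m) : 1 + y p 0 != 0 ->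
  R1 y p *m R1 (- (1 + y p 0)^-1 *: y) p = 1%:M.
Proof.
move=> g0; apply/matrixP => i j.
rewrite -[R1 y p]mulmx1 conjR1E !mul1mx.
case: (eqVneq j p) => [->|jp]; last first.
  have f0 : (false%:R : F) = 0 by [].
  rewrite !mxE [p == j]eq_sym (negPf jp) f0 !mulr0 !addr0.
  by rewrite mulr0 addr0.
rewrite !mxE !eqxx /= !mulr1 -addrA [X in _ + X = _](_ : _ = 0) ?addr0 //.
by field.
Qed.

Lemma f0R : (false%:R : F) = 0. Proof. by []. Qed.
Lemma t1R : (true%:R : F) = 1. Proof. by []. Qed.

Lemma upper_R1 (y : 'cV[F]_m) (p : 'I_m) :
  (forall i : 'I_m, (p < i)%N -> y i 0 = 0) -> upper (R1 y p).
Proof.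
move=> hy i j ji; rewrite R1E.
have -> : (i == j) = false by apply/negP => /eqP e; rewrite e ltnn in ji.
case: (eqVneq j p) => [e|_]; last by rewrite f0R mulr0 addr0.
by rewrite hy ?mul0r ?addr0 // -e.
Qed.

Lemma bdiag_R1 (y : 'cV[F]_m) (p : 'I_m) :
  (forall i : 'I_m, y i 0 != 0 -> (blk i : nat) = blk p) ->
  block_diag blk (R1 y p).
Proof.
move=> hy a b ab; rewrite R1E.
have -> : (a == b) = false by apply/negP => /eqP e; rewrite e eqxx in ab.
case: (eqVneq b p) => [e|_]; last by rewrite f0R mulr0 addr0.
case: (eqVneq (y a 0) 0) => [->|/hy h]; first by rewrite mul0r addr0.
by move: ab; rewrite e h eqxx.
Qed.

Lemma scale_supp (c : F) (y : 'cV[F]_m) i : (c *: y) i 0 != 0 -> y i 0 != 0.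
Proof. by rewrite mxE; apply: contraNneq => ->; rewrite mulr0. Qed.

Definition Djm (ps : seq ('I_m * 'I_m)) : 'M[F]_m := \matrix_(i, j) ((i, j) \in ps)%:R.
Definition used (ps : seq ('I_m * 'I_m)) := flatten [seq [:: x.1; x.2] | x <- ps].
Definition valid n (ps : seq ('I_m * 'I_m)) := uniq (used ps) &&
  all (fun x : 'I_m * 'I_m => [&& (x.1 < n)%N, (x.2 < n)%N & (blk x.2 : nat) == (blk x.1).+1]) ps.

Lemma mem_used ps x : x \in ps -> (x.1 \in used ps) && (x.2 \in used ps).
Proof.
elim: ps => //= y ps IH; rewrite in_cons => /orP[/eqP->|/IH/andP[h1 h2]].
  by rewrite !in_cons !eqxx orbT.
by rewrite !mem_cat h1 h2 !orbT.
Qed.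

Lemma used_inv ps x y : uniq (used ps) -> x \in ps -> y \in ps ->
  [/\ x.1 = y.1 -> x = y, x.2 = y.2 -> x = y & x.2 != y.1].
Proof.
elim: ps => //= z ps IH.
rewrite -/(used ps) in_cons negb_or => /and3P[/andP[z12 z1] z2 ups].
have Hd : forall w, w \in ps ->
    [&& z.1 != w.1, z.1 != w.2, z.2 != w.1 & z.2 != w.2].
  move=> w /mem_used/andP[w1 w2].
  by apply/and4P; split; apply/negP => /eqP e;
    [move: z1|move: z1|move: z2|move: z2]; rewrite e ?w1 ?w2.
rewrite !in_cons => /orP[/eqP->|xi] /orP[/eqP->|yi].
- by split=> //; rewrite eq_sym.
- have /and4P[a b c d] := Hd _ yi; split=> [e|e|//]; first by rewrite e eqxx in a.
  by rewrite e eqxx in d.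
- have /and4P[a b c d] := Hd _ xi; split=> [e|e|]; first by rewrite e eqxx in a.
    by rewrite e eqxx in d.
  by rewrite eq_sym.
- exact: IH.
Qed.

Lemma DjE ps i j : Djm ps i j = ((i, j) \in ps)%:R.
Proof. by rewrite mxE. Qed.

Lemma Dj_col_tail ps a b i : uniq (used ps) -> (a, b) \in ps ->
  Djm ps i b = (i == a)%:R.
Proof.
move=> u ab; rewrite DjE; case: (eqVneq i a) => [->|ia]; first by rewrite ab.
case abi: ((i, b) \in ps) => //.
by have [_ /(_ erefl) [] /eqP] := used_inv u abi ab; rewrite (negPf ia).
Qed.

Lemma Dj_row_head ps a b j : uniq (used ps) -> (a, b) \in ps ->
  Djm ps a j = (j == b)%:R.
Proof.
move=> u ab; rewrite DjE; case: (eqVneq j b) => [->|jb]; first by rewrite ab.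
case abi: ((a, j) \in ps) => //.
by have [/(_ erefl) [] /eqP] := used_inv u abi ab; rewrite (negPf jb).
Qed.

Lemma Dj_unused_col ps i b : b \notin used ps -> Djm ps i b = 0.
Proof.
move=> hb; rewrite DjE; case e: ((i, b) \in ps) => //.
by move: (mem_used e) => /andP[_ /= h]; rewrite h in hb.
Qed.

Lemma Dj_unused_row ps a j : a \notin used ps -> Djm ps a j = 0.
Proof.
move=> hb; rewrite DjE; case e: ((a, j) \in ps) => //.
by move: (mem_used e) => /andP[/= h _]; rewrite h in hb.
Qed.

Lemma Dj_sq ps : uniq (used ps) -> Djm ps *m Djm ps = 0.
Proof.
move=> u; apply/matrixP => i j; rewrite !mxE big1 // => l _.
rewrite !DjE; case e1: ((i, l) \in ps); last by rewrite mul0r.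
case e2: ((l, j) \in ps); last by rewrite mulr0.
by have [_ _ /=] := used_inv u e1 e2; rewrite eqxx.
Qed.

Lemma usedP ps i : i \in used ps -> exists2 x, x \in ps & (i == x.1) || (i == x.2).
Proof.
case/flattenP => l /mapP[x xi ->]; rewrite !in_cons orbF => h.
by exists x.
Qed.

Lemma valid_pair n ps x : valid n ps -> x \in ps ->
  [/\ (x.1 < n)%N, (x.2 < n)%N & (blk x.2 : nat) = (blk x.1).+1].
Proof.
by case/andP=> _ /allP h /h /and3P[a b /eqP c].
Qed.

Lemma valid_used n ps i : valid n ps -> i \in used ps -> (i < n)%N.
Proof.
move=> v /usedP[x xi /orP[]/eqP->]; by have [] := valid_pair v xi.
Qed.

Lemma stepA n (nn : 'I_m) (M : 'M[F]_m) ps :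
  (nn : nat) = n -> block_superdiag blk M -> M *m M = 0 -> valid n ps ->
  (forall i (j : 'I_m), (j < n)%N -> M i j = Djm ps i j) ->
  exists G Gi (c' : 'I_m -> F),
    [/\ G *m Gi = 1%:M, upper G, block_diag blk G & block_diag blk Gi] /\
    [/\ (forall i (j : 'I_m), (j < n)%N -> (Gi *m M *m G) i j = Djm ps i j),
     (forall i, (Gi *m M *m G) i nn = c' i) &
     (forall i, c' i != 0 ->
        [/\ i \notin used ps, (i < n)%N & (blk nn : nat) = (blk i).+1])].
Proof.
move=> en hM hMM v hcol; have u : uniq (used ps) by case/andP: v.
pose c i := M i nn.
pose z : 'cV[F]_m := \col_b (\sum_a Djm ps a b * c a).
have zsupp : forall b, z b 0 != 0 -> exists a, ((a, b) \in ps) && (c a != 0).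
  move=> b; case: (pickP (fun a => ((a, b) \in ps) && (c a != 0))) => [a ha|h].
    by exists a.
  rewrite mxE big1 ?eqxx // => a _; move: (h a); rewrite DjE.
  by case: ((a, b) \in ps) => /= [/negbFE/eqP->|]; rewrite ?mulr0 ?mul0r.
have zlt : forall b, z b 0 != 0 -> (b < n)%N.
  by move=> b /zsupp[a /andP[ab _]]; have [] := valid_pair v ab.
have zt : forall a b, (a, b) \in ps -> z b 0 = c a.
  move=> a b ab; rewrite mxE (bigD1 a) //= big1 ?addr0.
    by rewrite (Dj_col_tail _ u ab) eqxx mul1r.
  by move=> a' /negPf na; rewrite (Dj_col_tail _ u ab) na mul0r.
have cb_tail : forall a b, (a, b) \in ps -> c b = 0.
  move=> a b ab; have [_ bn _] := valid_pair v ab.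
  have h : (M *m M) a nn = 0 by rewrite hMM mxE.
  move: h; rewrite mxE (bigD1 b) // big1 => [|l /negPf lb].
    by rewrite /= addr0 hcol // (Dj_row_head _ u ab) eqxx mul1r.
  case: (ltnP l n) => ln.
    by rewrite hcol // (Dj_row_head _ u ab) lb mul0r.
  case: (eqVneq (M l nn) 0) => [->|/(bsup_lt hM)]; first by rewrite mulr0.
  by rewrite en ltnNge ln.
have csupp : forall i, c i != 0 -> (i < n)%N /\ (blk nn : nat) = (blk i).+1.
  move=> i ci; split; first by rewrite -en; apply: (bsup_lt hM ci).
  exact: (bsup_blk hM ci).
have nnu : nn \notin used ps.
  by apply/negP => /(valid_used v); rewrite en ltnn.
have znn : z nn 0 = 0.
  by apply/eqP; apply: contraT => /zlt; rewrite en ltnn.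
pose y := - z.
have g1 : 1 + y nn 0 = 1 by rewrite mxE znn oppr0 addr0.
pose y' := - (1 + y nn 0)^-1 *: y.
have ysupp : forall b, y b 0 != 0 -> z b 0 != 0.
  by move=> b; rewrite mxE oppr_eq0.
have yblk : forall b, y b 0 != 0 -> (blk b : nat) = blk nn.
  move=> b /ysupp/zsupp[a /andP[ab ca]].
  have [_ _ ->] := valid_pair v ab.
  by have [_ ->] := csupp _ ca.
pose c' i := c i + (M *m y) i 0.
exists (R1 y nn), (R1 y' nn), c'.
have Hconj : forall i (j : 'I_m), (j <= n)%N ->
    (R1 y' nn *m M *m R1 y nn) i j = M i j + (M *m y) i 0 * (j == nn)%:R.
  move=> i j jn; rewrite conjR1E.
  have -> : M nn j = 0.
    case: (eqVneq (M nn j) 0) => // /(bsup_lt hM); rewrite en ltnNge jn //.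
  have -> : (M *m y) nn 0 = 0.
    rewrite mxE big1 // => b _.
    case: (eqVneq (y b 0) 0) => [->|/ysupp/zlt bn]; first by rewrite mulr0.
    case: (eqVneq (M nn b) 0) => [->|/(bsup_lt hM)]; first by rewrite mul0r.
    by rewrite en ltnNge ltnW.
  by rewrite mul0r !addr0 mulr0 addr0.
split; first split.
- by apply: R1_mul; rewrite g1 oner_neq0.
- by apply: upper_R1 => i ni; apply/eqP; apply: contraT => /ysupp/zlt;
    rewrite -en ltnNge ltnW.
- exact: bdiag_R1.
- by apply: bdiag_R1 => i /scale_supp /yblk.
split.
- move=> i j jn; rewrite Hconj; last exact: ltnW.
  have -> : (j == nn) = false by apply/negP => /eqP e; rewrite e en ltnn in jn.
  by rewrite f0R mulr0 addr0 hcol.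
- by move=> i; rewrite Hconj ?eqxx ?t1R ?mulr1 // en.
move=> i; rewrite /c'.
case: (boolP (has (fun x => x.1 == i) ps)) => [/hasP[[a b] ab /= /eqP ai]|nh].
  rewrite ai in ab *; rewrite mxE (bigD1 b) //= big1 ?addr0.
    have [_ bn _] := valid_pair v ab.
    by rewrite hcol // (Dj_row_head _ u ab) eqxx mul1r mxE (zt _ _ ab) addrN eqxx.
  move=> b' /negPf bb.
  case: (eqVneq (y b' 0) 0) => [->|/ysupp/zlt bn]; first by rewrite mulr0.
  by rewrite hcol // (Dj_row_head _ u ab) bb mul0r.
have -> : (M *m y) i 0 = 0.
  rewrite mxE big1 // => b _.
  case: (eqVneq (y b 0) 0) => [->|/ysupp/zlt bn]; first by rewrite mulr0.
  rewrite hcol // DjE.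
  case e: ((i, b) \in ps); last by rewrite mul0r.
  by move: nh; rewrite (introT hasP) //; exists (i, b).
rewrite addr0 => ci; have [i_n ib] := csupp _ ci; split=> //.
apply/negP => /usedP[[a b] ab /= /orP[]/eqP e].
  by move: nh; rewrite (introT hasP) //; exists (a, b); rewrite //= e.
by move: ci; rewrite e (cb_tail _ _ ab) eqxx.
Qed.

Lemma valid_weak n ps : valid n ps -> valid n.+1 ps.
Proof.
case/andP=> u /allP h; apply/andP; split=> //; apply/allP => x /h /and3P[a b c].
by rewrite !ltnS (ltnW a) (ltnW b) c.
Qed.

Lemma used_rcons ps x : used (rcons ps x) = used ps ++ [:: x.1; x.2].
Proof. by rewrite /used map_rcons flatten_rcons. Qed.

Lemma stepB n (nn : 'I_m) (M : 'M[F]_m) ps (c' : 'I_m -> F) :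
  (nn : nat) = n -> valid n ps ->
  (forall i (j : 'I_m), (j < n)%N -> M i j = Djm ps i j) ->
  (forall i, M i nn = c' i) ->
  (forall i, c' i != 0 ->
     [/\ i \notin used ps, (i < n)%N & (blk nn : nat) = (blk i).+1]) ->
  exists G Gi ps',
    [/\ G *m Gi = 1%:M, upper G, block_diag blk G & block_diag blk Gi] /\
    valid n.+1 ps' /\
    (forall i (j : 'I_m), (j < n.+1)%N -> (Gi *m M *m G) i j = Djm ps' i j).
Proof.
move=> en v hcol hnn hsupp; have u : uniq (used ps) by case/andP: v.
have nnu : nn \notin used ps.
  by apply/negP => /(valid_used v); rewrite en ltnn.
have vS := valid_weak v.
case: (pickP (fun i => c' i != 0)) => [i0 ci0 | h0]; last first.
  exists 1%:M, 1%:M, ps; split.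
    by split; [rewrite mulmx1|exact: upper1|exact: bdiag1|exact: bdiag1].
  split=> // i j; rewrite mul1mx mulmx1 ltnS leq_eqVlt => /orP[/eqP jn|]; last exact: hcol.
  have -> : j = nn by apply: val_inj; rewrite /= jn en.
  by rewrite hnn (Dj_unused_col _ nnu); move: (h0 i) => /= /negbFE/eqP.
case: (@arg_maxnP _ i0 (fun i => c' i != 0) (fun i : 'I_m => (i : nat)) ci0)
  => a0 ca0 amax.
have [a0u a0n ba0] := hsupp _ ca0.
pose y : 'cV[F]_m := \col_i (c' i - (i == a0)%:R).
have yE : forall i, y i 0 = c' i - (i == a0)%:R by move=> i; rewrite mxE.
have g : 1 + y a0 0 = c' a0 by rewrite yE eqxx t1R addrC subrK.
have ysupp : forall i, y i 0 != 0 -> (i = a0) \/ (c' i != 0).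
  move=> i; rewrite yE; case: (eqVneq i a0) => [->|ia]; first by left.
  by rewrite f0R subr0; right.
have My : forall i, (M *m y) i 0 = 0.
  move=> i; rewrite mxE big1 // => b _.
  case: (eqVneq (y b 0) 0) => [->|/ysupp h]; first by rewrite mulr0.
  have [bu bn] : b \notin used ps /\ (b < n)%N.
    by case: h => [->|/hsupp[]] //.
  by rewrite hcol // (Dj_unused_col _ bu) mul0r.
exists (R1 y a0), (R1 (- (1 + y a0 0)^-1 *: y) a0), (rcons ps (a0, nn)).
split; first split.
- by apply: R1_mul; rewrite g.
- apply: upper_R1 => i ai; rewrite yE.
  have -> : (i == a0) = false by apply/negP => /eqP e; rewrite e ltnn in ai.
  case: (eqVneq (c' i) 0) => [->|/amax]; first by rewrite subrr.
  by move=> /= h; move: ai; rewrite ltnNge h.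
- apply: bdiag_R1 => i /ysupp [->//|/hsupp[_ _]].
  by rewrite ba0 => -[].
- apply: bdiag_R1 => i /scale_supp/ysupp [->//|/hsupp[_ _]].
  by rewrite ba0 => -[].
split.
  apply/andP; split.
    rewrite used_rcons cat_uniq u /= andbT orbF negb_or a0u nnu /= in_cons orbF.
    by apply/eqP => e; move: a0n; rewrite e en ltnn.
  rewrite all_rcons /= ltnS (ltnW a0n) en ltnSn ba0 eqxx /=.
  by case/andP: vS.
move=> i j jn; rewrite conjR1E !My !mul0r !addr0 DjE mem_rcons in_cons.
move: jn; rewrite ltnS leq_eqVlt => /orP[/eqP jn|jn].
  have -> : j = nn by apply: val_inj; rewrite /= jn en.
  rewrite !hnn mxE g yE xpair_eqE eqxx andbT.
  have -> : (i, nn) \in ps = false.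
    by apply/negP => /mem_used/andP[_ /= h]; rewrite h in nnu.
  rewrite orbF.
  have gz : c' a0 != 0 by [].
  have -> : c' i + - (c' a0)^-1 * (c' i - (i == a0)%:R) * c' a0 = (i == a0)%:R.
    by field.
  by [].
rewrite (hcol a0) // (Dj_unused_row _ a0u) mulr0 addr0 hcol // DjE xpair_eqE.
have -> : (j == nn) = false by apply/negP => /eqP e; rewrite e en ltnn in jn.
by rewrite andbF.
Qed.

Lemma step n (nn : 'I_m) (M : 'M[F]_m) ps :
  (nn : nat) = n -> block_superdiag blk M -> M *m M = 0 -> valid n ps ->
  (forall i (j : 'I_m), (j < n)%N -> M i j = Djm ps i j) ->
  exists G Gi ps',
    [/\ G *m Gi = 1%:M, upper G, block_diag blk G & block_diag blk Gi] /\
    valid n.+1 ps' /\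
    (forall i (j : 'I_m), (j < n.+1)%N -> (Gi *m M *m G) i j = Djm ps' i j).
Proof.
move=> en hM hMM v hcol.
have [GA [GAi [c' [[h1 h2 h3 h4] [h5 h6 h7]]]]] := stepA en hM hMM v hcol.
have [GB [GBi [ps' [[k1 k2 k3 k4] [k5 k6]]]]] := stepB en v h5 h6 h7.
exists (GA *m GB), (GBi *m GAi), ps'; split; first split.
- by rewrite mulmxA -(mulmxA GA) k1 mulmx1 h1.
- exact: upper_mul.
- exact: bdiag_mul.
- exact: bdiag_mul.
split=> // i j jn; rewrite -k6 //; congr (_ i j); by rewrite !mulmxA.
Qed.

Lemma main_inv (D : 'M[F]_m) : block_superdiag blk D -> D *m D = 0 ->
  forall n, (n <= m)%N -> exists B Bi ps,
    [/\ B *m Bi = 1%:M, upper B, block_diag blk B & block_diag blk Bi] /\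
    valid n ps /\
    (forall i (j : 'I_m), (j < n)%N -> (Bi *m D *m B) i j = Djm ps i j).
Proof.
move=> hD hDD; elim=> [_|n IH nm].
  exists 1%:M, 1%:M, [::]; split.
    by split; [rewrite mulmx1|exact: upper1|exact: bdiag1|exact: bdiag1].
  by split.
have [B [Bi [ps [[e1 uB dB dBi] [v hc]]]]] := IH (ltnW nm).
pose nn : 'I_m := Ordinal nm.
have hM : block_superdiag blk (Bi *m D *m B).
  by apply: bsup_mulr => //; apply: bsup_mull.
have hMM : (Bi *m D *m B) *m (Bi *m D *m B) = 0.
  have -> : (Bi *m D *m B) *m (Bi *m D *m B) = Bi *m (D *m (B *m Bi) *m D) *m B.
    by rewrite !mulmxA.
  by rewrite e1 mulmx1 hDD mulmx0 mul0mx.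
have [G [Gi [ps' [[g1 g2 g3 g4] [v' hc']]]]] := @step n nn _ ps erefl hM hMM v hc.
exists (B *m G), (Gi *m Bi), ps'; split; first split.
- by rewrite mulmxA -(mulmxA B) g1 mulmx1 e1.
- exact: upper_mul.
- exact: bdiag_mul.
- exact: bdiag_mul.
split=> // i j jn; rewrite -hc' //; congr (_ i j); by rewrite !mulmxA.
Qed.

Lemma bsup_Dj n ps : valid n ps -> block_superdiag blk (Djm ps).
Proof.
move=> v a b; apply: contraNeq; rewrite DjE.
case e: ((a, b) \in ps); last by rewrite eqxx.
by move=> _; have [_ _ ->] := valid_pair v e.
Qed.

End Main.

Section AJ.
Variables (F : fieldType) (m : nat).
Implicit Types ps : seq ('I_m * 'I_m).

Lemma size_used ps : size (used ps) = (size ps).*2.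
Proof. by elim: ps => //= x ps IH; rewrite -/(used ps) IH. Qed.

Lemma nth_used ps t x0 : (t < size ps)%N ->
  nth x0 (used ps) t.*2 = (nth (x0, x0) ps t).1 /\
  nth x0 (used ps) t.*2.+1 = (nth (x0, x0) ps t).2.
Proof.
elim: ps t => //= x ps IH [|t] //= ht.
by rewrite -/(used ps); apply: IH.
Qed.

Lemma invmx_right (A B : 'M[F]_m) : A *m B = 1%:M -> invmx A = B.
Proof.
move=> e; have [uA _] := mulmx1_unit e.
by rewrite -[invmx A]mulmx1 -e mulmxA mulVmx // mul1mx.
Qed.

Lemma perm_conjE (P : 'S_m) (A : 'M[F]_m) i j :
  (invmx (perm_mx P^-1) *m A *m perm_mx P^-1) i j = A (P i) (P j).
Proof.
have h : perm_mx P^-1 *m perm_mx P = 1%:M :> 'M[F]_m.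
  by rewrite -perm_mxM mulVg perm_mx1.
rewrite (invmx_right h).
by rewrite -row_permE -col_permE !mxE.
Qed.

Lemma aj ps : uniq (used ps) -> almost_jordan (Djm F ps).
Proof.
move=> u; split; first exact: Dj_sq.
pose L := used ps ++ [seq i <- enum 'I_m | i \notin used ps].
have uL : uniq L.
  rewrite cat_uniq u filter_uniq ?enum_uniq // andbT.
  by apply/hasPn => x; rewrite mem_filter => /andP[h _].
have inL : forall x, x \in L.
  by move=> x; rewrite mem_cat mem_filter mem_enum andbT orbN.
have sL : size L = m.
  rewrite -(card_uniqP uL) -[RHS]card_ord; apply: eq_card => x.
  by rewrite inL.
have q_inj : injective (fun i : 'I_m => nth i L i).
  move=> i j e; apply/val_inj/eqP.
  rewrite -(nth_uniq i _ _ uL) ?sL ?ltn_ord //.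
  have e' : nth i L (val i) = nth j L (val j) := e.
  by rewrite e' (set_nth_default i) ?eqxx // sL ltn_ord.
pose P : 'S_m := perm q_inj.
exists (P^-1)%g.
pose p := size ps.
have h2p : (p.*2 <= m)%N.
  have : (size (used ps) <= size L)%N by rewrite size_cat leq_addr.
  by rewrite sL size_used.
exists (nseq p 2 ++ nseq (m - p.*2) 1)%N; split.
- by rewrite all_cat !all_nseq /= !orbT.
- rewrite sumn_cat !sumn_nseq; lia.
apply/matrixP => i j; rewrite perm_conjE !permE /= DjE mxE.
set s := (nseq p 2 ++ nseq (m - p.*2) 1)%N.
suff -> : ((nth i L i, nth j L j) \in ps) =
  [exists t : 'I_(size s), [&& nth 0%N s t == 2%N,
      (i : nat) == sumn (take t s) & (j : nat) == i.+1]].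
  by case: [exists _, _].
have defL : forall x0 t, (t < size (used ps))%N -> nth x0 L t = nth x0 (used ps) t.
  by move=> x0 t ht; rewrite nth_cat ht.
have sLu : forall t, (t < size (used ps))%N -> (t < size L)%N.
  by move=> t ht; rewrite size_cat ltn_addr.
have hsum : forall t, (t < p)%N -> sumn (take t s) = t.*2.
  move=> t tp; rewrite take_cat size_nseq tp (take_nseq _ (ltnW tp)).
  by rewrite sumn_nseq mul2n.
apply/idP/idP => [H|/existsP H].
  move: H.
  case/(nthP (i, i)) => t tp e.
  have t2 : (t.*2 < size (used ps))%N by rewrite size_used ltn_double.
  have t21 : (t.*2.+1 < size (used ps))%N by rewrite size_used ltn_Sdouble.
  have [e1 _] := nth_used i tp.
  have [_ e2] := nth_used j tp.
  rewrite (set_nth_default (i, i) (j, j) tp) e /= in e2.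
  rewrite e /= in e1.
  have hi : (i : nat) = t.*2.
    apply/eqP; rewrite -(nth_uniq i _ _ uL) ?sL ?ltn_ord //; last by rewrite -sL sLu.
    by rewrite (defL _ t.*2) // e1.
  have hj : (j : nat) = t.*2.+1.
    apply/eqP; rewrite -(nth_uniq j _ _ uL) ?sL ?ltn_ord //; last by rewrite -sL sLu.
    by rewrite (defL _ t.*2.+1) // e2.
  have ts : (t < size s)%N by rewrite size_cat size_nseq ltn_addr.
  apply/existsP; exists (Ordinal ts) => /=.
  rewrite nth_cat size_nseq tp nth_nseq tp eqxx /= hsum // hi hj !eqxx.
  by [].
move: H => [[t ts]] /= /and3P[hn /eqP hi /eqP hj].
have tp : (t < p)%N.
  move: hn; rewrite nth_cat size_nseq; case: ltnP => // _.
  by rewrite nth_nseq; case: ifP.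
rewrite hsum // in hi; rewrite hi in hj.
have t2 : (t.*2 < size (used ps))%N by rewrite size_used ltn_double.
have t21 : (t.*2.+1 < size (used ps))%N by rewrite size_used ltn_Sdouble.
have [e1 _] := nth_used i tp.
have [_ e2] := nth_used j tp.
rewrite (set_nth_default (i, i) (j, j) tp) in e2.
rewrite hi hj !defL // e1 e2 -surjective_pairing.
exact: mem_nth.
Qed.

End AJ.

Unset Implicit Arguments.

Theorem theorem1p4 (F : fieldType) (m k : nat) (blk : 'I_m -> 'I_k)
  (D : 'M[F]_m) :
  consec_partition blk ->
  differential D ->
  block_superdiag blk D ->
  exists (Dj B : 'M[F]_m),
    [/\ almost_jordan Dj, block_superdiag blk Dj,
        triangular B, block_diag blk B &
        D = B *m Dj *m invmx B].
Proof.
move=> Hc hD hbs.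
have [B [Bi [ps [[e1 uB dB dBi] [v hc]]]]] := main_inv Hc hbs hD (leqnn m).
have hM : Bi *m D *m B = Djm F ps.
  by apply/matrixP => i j; apply: hc (ltn_ord j).
have uBu : B \in unitmx by case: (mulmx1_unit e1).
have iB : invmx B = Bi by apply: invmx_right.
exists (Djm F ps), B; split.
- by apply: aj; case/andP: v.
- exact: bsup_Dj v.
- by split.
- exact: dB.
rewrite -hM iB !mulmxA e1 mul1mx -mulmxA e1 mulmx1.
by [].
Qed.
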